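(* Let $(\Omega,\mathcal{F},\mathbb{P})$ be a nonatomic probability space, let $a>0$, $c\ge0$, $C=\frac1a(1+ac-\sqrt{1+a^2c^2})$, and let $u(x)=C$ for $x\ge c$ and $u(x)=\frac1a(1+ax-\sqrt{1+a^2x^2})$ for $x<c$. Let $\alpha<C$ and set $\mathcal{A}_u^\infty=\{X\in L^\infty:\mathbb{E}[u(X)]\ge\alpha\}$. Let $S=(S_0,S_T)$ be a traded asset with $S_T\in L^\infty$ and assume $\rho_{\mathcal{A}_u^\infty,S}$ is finite-valued on $L^\infty$. Then $\mathrm{Index}_{\mathrm{fin}}(\rho_{\mathcal{A}_u^\infty,S})=1$ and the infimum defining the index is attained.
   Context: A traded asset is $S=(S_0,S_T)$ with $S_0>0$, $S_T\ge0$ a.s., $S_T\ne0$. For $\mathcal{B}\subset L^\infty$, $\rho_{\mathcal{B},S}(X)=\inf\{m\in\mathbb{R}:X+\frac{m}{S_0}S_T\in\mathcal{B}\}$. For a convex, law-invariant acceptance set $\mathcal{A}\subset L^\infty$ with $\rho_{\mathcal{A},S}$ finite-valued on $L^\infty$, $\mathrm{Index}_{\mathrm{fin}}(\rho_{\mathcal{A},S})=\inf\{p\in[1,\infty):\text{the closure of }\mathcal{A}\text{ in }L^p\text{ has nonempty interior in }L^p\}$, with $\inf\emptyset=\infty$; the index is attained if this infimum belongs to the set. *)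

(* Defs.v *)
From HB Require Import structures.
From mathcomp Require Import all_boot all_order all_algebra.
From mathcomp Require Import all_classical all_reals all_analysis.
Set Implicit Arguments. Unset Strict Implicit. Unset Printing Implicit Defensive.
Import Order.TTheory GRing.Theory Num.Theory.
Local Open Scope classical_set_scope.
Local Open Scope ring_scope.

Section Defs.
Context {d : measure_display} {T : measurableType d} {R : realType}.
Variable P : probability T R.

Definition nonatomic : Prop :=
  forall A : set T, measurable A -> (0 < P A)%E ->
    exists B : set T, [/\ measurable B, B `<=` A, (0 < P B)%E & (P B < P A)%E].

Definition Linf (f : T -> R) : Prop :=
  measurable_fun setT f /\ finite_norm P +oo%E f.

Definition Lp (p : R) (f : T -> R) : Prop :=
  measurable_fun setT f /\ finite_norm P p%:E f.

Definition Ldist (p : R) (f g : T -> R) : \bar R :=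
  'N[P]_p%:E [EFin \o (f \- g)].

Definition Lclosure (p : R) (B : set (T -> R)) : set (T -> R) :=
  [set f | Lp p f /\
     forall e : R, 0 < e -> exists g, B g /\ (Ldist p f g < e%:E)%E].

Definition Lp_interior_nonempty (p : R) (C : set (T -> R)) : Prop :=
  exists f, Lp p f /\ exists2 e : R, 0 < e &
    forall g, Lp p g -> (Ldist p g f < e%:E)%E -> C g.

Definition index_set (B : set (T -> R)) : set R :=
  [set p | 1 <= p /\ Lp_interior_nonempty p (Lclosure p B)].

(* Index_fin (inf of the empty set is +oo) *)
Definition Index_fin (B : set (T -> R)) : \bar R :=
  ereal_inf [set p%:E | p in index_set B].

Definition Index_fin_attained (B : set (T -> R)) : Prop :=
  exists2 p, index_set B p & p%:E = Index_fin B.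

Definition rho (B : set (T -> R)) (S0 : R) (ST : T -> R) (X : T -> R) : \bar R :=
  ereal_inf [set m%:E | m in [set m : R | B (X \+ (fun w => m / S0 * ST w))]].

Definition Cconst (a c : R) : R := (1 + a * c - Num.sqrt (1 + a ^+ 2 * c ^+ 2)) / a.

Definition u_fun (a c : R) (x : R) : R :=
  if x < c then (1 + a * x - Num.sqrt (1 + a ^+ 2 * x ^+ 2)) / a else Cconst a c.

Definition Au (a c alpha : R) : set (T -> R) :=
  [set X | Linf X /\ (alpha%:E <= \int[P]_w (u_fun a c (X w))%:E)%E].

End Defs.

(* Main.v *)
Require Import Defs.
From HB Require Import structures.
From mathcomp Require Import all_boot all_order all_algebra.
From mathcomp Require Import all_classical all_reals all_analysis.
From mathcomp Require Import ring lra measurable_realfun ess_sup_inf.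
Import Order.TTheory GRing.Theory Num.Theory.
Local Open Scope classical_set_scope.
Local Open Scope ring_scope.

Lemma sqrt_lip (R : realType) (s t : R) :
  Num.sqrt (1 + s^+2) <= Num.sqrt (1 + t^+2) + `|s - t|.
Proof.
have h0 : 0 <= Num.sqrt (1 + t^+2) + `|s - t| by rewrite addr_ge0 ?sqrtr_ge0.
rewrite -[X in _ <= X]ger0_norm // -sqrtr_sqr ler_sqrt ?sqr_ge0 //.
have hA : `|t| <= Num.sqrt (1 + t^+2).
  by rewrite -sqrtr_sqr ler_sqrt ?addr_ge0 ?sqr_ge0 // lerDr.
have hB : (s - t) * t <= `|s - t| * `|t|.
  by rewrite -normrM ler_norm.
have hC : `|s - t| * `|t| <= `|s - t| * Num.sqrt (1 + t^+2).
  by rewrite ler_wpM2l.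
have hD : `|s - t| ^+ 2 = (s - t)^+2 by rewrite -normrX ger0_norm ?sqr_ge0.
rewrite sqrrD sqr_sqrtr ?addr_ge0 ?sqr_ge0 // hD.
nra.
Qed.

Lemma u_lb (R : realType) (a c x : R) : 0 < a ->
  Cconst a c - 2 * `|x - c| <= u_fun a c x.
Proof.
move=> a0; rewrite /u_fun; case: ifPn => xc; last first.
  by rewrite lerBlDr lerDl mulr_ge0.
have := @sqrt_lip R (a * x) (a * c).
rewrite !exprMn -mulrBr normrM gtr0_norm // => hs.
have -> : Cconst a c - 2 * `|x - c| =
   (1 + a * c - Num.sqrt (1 + a ^+ 2 * c ^+ 2) - 2 * a * `|x - c|) / a.
  by rewrite /Cconst; field; rewrite lt0r_neq0.
apply: ler_wpM2r; first by rewrite invr_ge0 ltW.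
have := ler_norm (c - x); rewrite distrC.
nra.
Qed.

Lemma u_meas (R : realType) (a c : R) : measurable_fun setT (u_fun a c).
Proof.
have -> : u_fun a c = (fun y => (1 + a * Num.min y c - Num.sqrt (1 + a^+2 * (Num.min y c)^+2)) / a).
  apply/funext => y; rewrite /u_fun /Cconst /Num.min /Order.min.
  by case: ifPn.
apply: measurable_funM => //.
apply: measurable_funB.
  apply: measurable_funD => //; apply: measurable_funM => //.
  exact: measurable_minr.
apply: measurableT_comp; first exact: continuous_measurable_fun (@sqrt_continuous R).
apply: measurable_funD => //; apply: measurable_funM => //.
apply: measurable_funX; exact: measurable_minr.
Qed.

Lemma u_ub (R : realType) (a c x : R) : 0 < a ->
  u_fun a c x <= Cconst a c + 2 * `|x - c|.
Proof.
move=> a0; rewrite /u_fun; case: ifPn => xc; last first.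
  by rewrite lerDl mulr_ge0.
have := @sqrt_lip R (a * c) (a * x).
rewrite !exprMn -mulrBr normrM gtr0_norm // distrC => hs.
have -> : Cconst a c + 2 * `|x - c| =
   (1 + a * c - Num.sqrt (1 + a ^+ 2 * c ^+ 2) + 2 * a * `|x - c|) / a.
  by rewrite /Cconst; field; rewrite lt0r_neq0.
apply: ler_wpM2r; first by rewrite invr_ge0 ltW.
have := ler_norm (c - x); rewrite distrC.
nra.
Qed.

Ltac dummy := idtac.
Definition clip {R : realType} (n : nat) (y : R) : R := Num.max (- n%:R) (Num.min y n%:R).

Lemma clip_le (R : realType) n (y : R) : `|clip n y| <= `|y| /\ `|clip n y| <= n%:R.
Proof.
rewrite /clip /Num.max /Num.min /Order.max /Order.min.
have n0 : (0 <= n%:R :> R) by [].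
case: (boolP (0 <= y)) => y0; last (move: y0; rewrite -ltNge => y0);
  case h2: (y < n%:R) => /=; case h1: (- (n%:R) < _) => /=;
  try (move/negbT: h1; rewrite -leNgt => h1); try (move/negbT: h2; rewrite -leNgt => h2); rewrite ?normrN ?normr_nat ?(ger0_norm y0) ?(ltr0_norm y0); split; lra.
Qed.

Lemma clip_eq (R : realType) n (y : R) : `|y| <= n%:R -> clip n y = y.
Proof.
rewrite /clip /Num.max /Num.min /Order.max /Order.min => /[dup] hy.
rewrite ler_norml => /andP[h3 h4].
case h2: (y < n%:R) => /=; case h1: (- (n%:R) < _) => //=;
  try (move/negbT: h1; rewrite -leNgt => h1); try (move/negbT: h2; rewrite -leNgt => h2); lra.
Qed.

Lemma clip_meas (R : realType) n : measurable_fun setT (@clip R n).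
Proof.
apply: measurable_maxr => //; exact: measurable_minr.
Qed.

Section Main.
Context (d : measure_display) (T : measurableType d) (R : realType) (P : probability T R).
Variables (a c alpha : R).
Hypotheses (a0 : 0 < a) (aC : alpha < Cconst a c).

Lemma PT : (P : {measure set T -> \bar R}) setT = 1%E.
Proof. exact: probability_setT. Qed.

Lemma cst_Lp : Lp P 1 (cst c).
Proof.
split; first exact: measurable_cst.
rewrite /finite_norm Lnorm1 /=.
rewrite integral_cst //. rewrite PT mule1; exact: ltry.
Qed.

Lemma clipX_Linf (h : T -> R) n : measurable_fun setT h ->
  Linf P (fun w => c + clip n (h w)).
Proof.
move=> mh; split.
  apply: measurable_funD => //; exact: measurableT_comp (clip_meas R n) mh.
rewrite /finite_norm unlock /Lnorm PT lte01.
apply: (@le_lt_trans _ _ (`|c| + n%:R)%:E); last exact: ltry.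
apply/ess_supP; apply: nearW => w /=.
rewrite lee_fin (le_trans (ler_normD _ _)) // lerD2l.
exact: (@clip_le R n (h w)).2.
Qed.


Lemma clipX_Au (h : T -> R) n : measurable_fun setT h ->
  (\int[P]_w `|(h w)%:E| <= ((Cconst a c - alpha)/2)%:E)%E ->
  Au P a c alpha (fun w => c + clip n (h w)).
Proof.
move=> mh hI; split; first exact: clipX_Linf.
set X := (fun w => c + clip n (h w)).
have mX : measurable_fun setT X.
  apply: measurable_funD => //; exact: measurableT_comp (clip_meas R n) mh.
have Xc w : `|X w - c| <= `|h w| /\ `|X w - c| <= n%:R.
  rewrite /X (addrC c) addrK; exact: clip_le.
set K := `|Cconst a c| + 2 * n%:R.
have iK : P.-integrable setT (EFin \o cst K) by exact (finite_measure_integrable_cst P K measurableT).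
have iu : P.-integrable setT (fun w => (u_fun a c (X w))%:E).
  apply: (le_integrable measurableT _ _ iK).
    apply/measurable_EFinP; exact: measurableT_comp (@u_meas R a c) mX.
  move=> w _ /=; rewrite lee_fin.
  have := @u_lb R a c (X w) a0; have := @u_ub R a c (X w) a0.
  have := (Xc w).2; have := ler_norm (- Cconst a c); have := ler_norm (Cconst a c).
  rewrite normrN /K => h1 h2 h3 h4 h5.
  rewrite (@ger0_norm _ (`|Cconst a c| + 2 * n%:R)) ?addr_ge0 ?mulr_ge0 // ler_norml; apply/andP; split; lra.
have mL : measurable_fun setT (fun w => 2 * `|X w - c|).
  apply: measurable_funM => //; apply: measurableT_comp => //.
  exact: measurable_funB.
have iL : P.-integrable setT (fun w => (2 * `|X w - c|)%:E).
  apply: (le_integrable measurableT _ _ iK).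
    exact/measurable_EFinP.
  move=> w _ /=; rewrite lee_fin.
  have := (Xc w).2; have := normr_ge0 (Cconst a c).
  rewrite /K => h1 h3.
  rewrite (@ger0_norm _ (`|Cconst a c| + 2 * n%:R)) ?addr_ge0 ?mulr_ge0 //.
  rewrite ger0_norm ?mulr_ge0 //; lra.
have step1 : (\int[P]_w ((Cconst a c)%:E - (2 * `|X w - c|)%:E) <=
    \int[P]_w (u_fun a c (X w))%:E)%E.
  apply: le_integral => //.
    exact: (integrableB measurableT (finite_measure_integrable_cst P (Cconst a c) measurableT) iL).
  move=> w _; rewrite -EFinB lee_fin; exact: u_lb.
have step2 : (\int[P]_w ((Cconst a c)%:E - (2 * `|X w - c|)%:E) =
    (Cconst a c)%:E - \int[P]_w (2 * `|X w - c|)%:E)%E.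
  rewrite (@integralB_EFin _ _ _ P setT (cst (Cconst a c)) (fun w => 2 * `|X w - c|)) //;
    last exact: (finite_measure_integrable_cst P _ measurableT).
  have ic := integral_cst P (@measurableT _ T) (Cconst a c)%:E.
  by rewrite PT mule1 in ic; rewrite -[in RHS]ic.
have step3 : (\int[P]_w (2 * `|X w - c|)%:E <= (2 * ((Cconst a c - alpha)/2))%:E)%E.
  apply: (@le_trans _ _ (\int[P]_w (2%:E * `|(h w)%:E|))%E).
    apply: (ge0_le_integral P measurableT).
    - by move=> w _; rewrite lee_fin mulr_ge0.
    - exact/measurable_EFinP.
    - apply: emeasurable_funM => //; apply: measurableT_comp => //.
      exact/measurable_EFinP.
    - move=> w _ /=; rewrite -EFinM lee_fin ler_wpM2l //; exact: (Xc w).1.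
  rewrite (ge0_integralZl_EFin P measurableT) //; last first.
    by apply: measurableT_comp => //; exact/measurable_EFinP.
  by rewrite EFinM lee_wpmul2l.
have J0 : (0 <= \int[P]_w (2 * `|X w - c|)%:E)%E.
  by apply: integral_ge0 => w _; rewrite lee_fin mulr_ge0.
have Jfin : (\int[P]_w (2 * `|X w - c|)%:E)%E \is a fin_num.
  by rewrite ge0_fin_numE // (le_lt_trans step3) ?ltry.
rewrite -(fineK Jfin) in step2 step3.
rewrite lee_fin in step3.
apply: le_trans step1; rewrite step2 -EFinB lee_fin; lra.
Qed.

Lemma main_interior : Lp_interior_nonempty P 1 (Lclosure P 1 (Au P a c alpha)).
Proof.
set e := (Cconst a c - alpha)/2.
have e0 : 0 < e by rewrite divr_gt0 // subr_gt0.
exists (cst c); split; first exact: cst_Lp.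
exists e => // g Lg gball.
split => // e' e'0.
have mg := Lg.1.
set h := fun w => g w - c.
have mh : measurable_fun setT h by apply: measurable_funB.
have hI : (\int[P]_w `|(h w)%:E| < e%:E)%E.
  move: gball; rewrite /Ldist Lnorm1 //.
have ih : P.-integrable setT (EFin \o h).
  apply/integrableP; split; first exact/measurable_EFinP.
  exact: lt_trans hI (ltry _).
have mf_ : forall n, measurable_fun setT ((fun n => EFin \o (clip n \o h)) n).
  move=> n; apply/measurable_EFinP; exact: measurableT_comp (clip_meas R n) mh.
have mf : measurable_fun setT (EFin \o h) by exact/measurable_EFinP.
have ff : {ae P, forall x, setT x -> (fun n => EFin \o (clip n \o h)) ^~ x @ \oo --> (EFin \o h) x}.
  apply: aeW => w _; apply: cvg_near_cst.
  exists (Num.truncn `|h w|).+1 => // n /= Nn; rewrite clip_eq //.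
  apply: (le_trans (ltW (truncnS_gt _))); rewrite ler_nat; exact: Nn.
have ig : P.-integrable setT (abse \o (EFin \o h)) by exact: integrable_abse ih.
have fg : {ae P, forall x n, setT x -> (`|(fun n => EFin \o (clip n \o h)) n x| <= (abse \o (EFin \o h)) x)%E}.
  apply: aeW => w n _ /=; rewrite lee_fin; exact: (@clip_le R n (h w)).1.
have [_ Hc _] := @dominated_convergence _ T R P setT measurableT
  (fun n => EFin \o (clip n \o h)) (EFin \o h) (abse \o (EFin \o h)) mf_ mf ff ig fg.
case/fine_cvgP: Hc => Hfin Hc'.
have Hlt := cvgr_lt _ Hc' _ e'0.
near \oo => n.
exists (fun w => c + clip n (h w)); split; first exact: clipX_Au (ltW hI).
have F1 : (\int[P]_x `|(EFin \o (clip n \o h)) x - (EFin \o h) x|)%E \is a fin_num.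
  by near: n; exact: Hfin.
have F2 : fine (\int[P]_x `|(EFin \o (clip n \o h)) x - (EFin \o h) x|)%E < e'.
  by near: n; exact: Hlt.
have -> : Ldist P 1 g (fun w => c + clip n (h w)) =
    (\int[P]_x `|(EFin \o (clip n \o h)) x - (EFin \o h) x|)%E.
  rewrite /Ldist Lnorm1; apply: eq_integral => w _ /=.
  by rewrite distrC /h; congr (`|_|%:E); ring.
by rewrite -(fineK F1) lte_fin.
Unshelve. all: by end_near.
Qed.

End Main.

Theorem corollary6p9 (d : measure_display) (T : measurableType d) (R : realType)
  (P : probability T R) (a c alpha S0 : R) (ST : T -> R) :
  nonatomic P ->
  0 < a -> 0 <= c -> alpha < Cconst a c ->
  0 < S0 ->
  {ae P, forall w, 0 <= ST w} ->
  ~ {ae P, forall w, ST w = 0} ->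
  Linf P ST ->
  (forall X, Linf P X -> rho (Au P a c alpha) S0 ST X \is a fin_num) ->
  Index_fin P (Au P a c alpha) = 1%:E /\ Index_fin_attained P (Au P a c alpha).
Proof.
move=> _ a0 c0 aC _ _ _ _ _.
have H1 : index_set P (Au P a c alpha) 1.
  by split; [exact: lexx | exact: (@main_interior _ _ _ P a c alpha a0 aC)].
have E : Index_fin P (Au P a c alpha) = 1%:E.
  apply/eqP; rewrite eq_le; apply/andP; split.
    by apply: ereal_inf_lbound; exists 1.
  by apply: le_ereal_inf_tmp => _ [p [p1 _] <-]; rewrite lee_fin.
by split => //; exists 1.
Qed.
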